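(* Let $q=2^m$ with $m$ a positive integer, let $b\in\mathbb{F}_q^*$ and $\delta\in\mathbb{F}_{q^2}\setminus\mathbb{F}_q$, and let $i$ be a non-negative integer. Put $$A=b\,\mathrm{Tr}_{q^2/q}(\delta)^{2^i},\quad B=b\,\mathrm{Tr}_{q^2/q}(\delta)^{2^i}\delta^{2q+2},\quad C=\mathrm{Tr}_{q^2/q}(\delta)^2,\quad D=1/A,$$ and define $S_{-1}=0$, $S_0=1$, $S_k=C^{2^{k-1}}S_{k-1}+D^{2^{k-1}}S_{k-2}$ for $k\geq1$. If the polynomial $$P(x)=b(x^q+x+\delta)^{2q+2^i+2}+x$$ permutes $\mathbb{F}_{q^2}$, then its compositional inverse over $\mathbb{F}_{q^2}$ is $$P^{-1}(x)=x+b\left(\delta+\sum_{k=0}^{m-1}\left(D^{2^k}S_{m-2-k}^{2^{k+1}}+D^{1-2^{k}}S_k\right)\left(x^q+x+B\right)^{2^k}\right)^{2q+2^i+2}.$$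
   Context: $\mathrm{Tr}_{q^2/q}(y)=y+y^q$. The compositional inverse of a permutation polynomial $f$ of $\mathbb{F}_{Q}$ is the unique polynomial $f^{-1}$ (modulo $x^Q-x$) with $f(f^{-1}(c))=f^{-1}(f(c))=c$ for all $c\in\mathbb{F}_Q$. *)

(* Defs.v *)
From HB Require Import structures.
From mathcomp Require Import all_boot all_order all_algebra all_field.
Set Implicit Arguments. Unset Strict Implicit. Unset Printing Implicit Defensive.
Import GRing.Theory.
Local Open Scope ring_scope.

Definition Tr (F : ringType) (q : nat) (y : F) : F := y + y ^+ q.

(* Shifted sequence: Sseq C D n = S_{n-1}, i.e. Sseq 0 = S_{-1} = 0,
   Sseq 1 = S_0 = 1, Sseq (n+2) = S_{n+1} = C^{2^n} S_n + D^{2^n} S_{n-1}. *)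
Fixpoint Sseq (F : ringType) (C D : F) (n : nat) {struct n} : F :=
  match n with
  | 0 => 0
  | 1 => 1
  | (n'.+1 as n1).+1 => C ^+ (2 ^ n') * Sseq C D n1 + D ^+ (2 ^ n') * Sseq C D n'
  end.

(* Main.v *)
Require Import Defs.
From HB Require Import structures.
From mathcomp Require Import all_boot all_order all_algebra all_field.
From mathcomp Require Import ring zify.
Import GRing.Theory.
Local Open Scope ring_scope.

Set Implicit Arguments. Unset Strict Implicit.

Section Aux.
Lemma frobD (F : fieldType) (ch : 2 \in [pchar F]) k (x y : F) :
  (x + y) ^+ (2 ^ k) = x ^+ (2 ^ k) + y ^+ (2 ^ k).
Proof.
apply: exprDn_pchar; rewrite pnatX; apply/orP; left.
by rewrite pnatE //; apply/andP; split.
Qed.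

Lemma frobP (F : fieldType) k j (x : F) :
  (x ^+ (2 ^ k)) ^+ (2 ^ j) = x ^+ (2 ^ (k + j)).
Proof. by rewrite -exprM expnD. Qed.

Lemma frob_sum (F : fieldType) (ch : 2 \in [pchar F]) k n (f : 'I_n -> F) :
  (\sum_(i < n) f i) ^+ (2 ^ k) = \sum_(i < n) f i ^+ (2 ^ k).
Proof.
apply: (big_morph (fun x : F => x ^+ (2 ^ k))).
  by move=> x y; apply: frobD.
by rewrite expr0n expn_eq0.
Qed.

Lemma Sseq_pow (F : fieldType) (ch : 2 \in [pchar F]) (C D : F) n j :
  Sseq C D n.+2 ^+ (2 ^ j) =
  C ^+ (2 ^ (n + j)) * Sseq C D n.+1 ^+ (2 ^ j) + D ^+ (2 ^ (n + j)) * Sseq C D n ^+ (2 ^ j).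
Proof. by rewrite /= frobD // !exprMn !frobP. Qed.

Lemma Sseq_dual (F : fieldType) (ch : 2 \in [pchar F]) (C D : F) n :
  Sseq C D n.+2 = C * Sseq C D n.+1 ^+ 2 + D ^+ 2 * Sseq C D n ^+ 4.
Proof.
suff H : forall n, Sseq C D n.+2 = C * Sseq C D n.+1 ^+ 2 + D ^+ 2 * Sseq C D n ^+ 4 /\
   Sseq C D n.+3 = C * Sseq C D n.+2 ^+ 2 + D ^+ 2 * Sseq C D n.+1 ^+ 4 by case: (H n).
clear n; elim=> [|n [IH1 IH2]].
  split.
    by rewrite /= expn0; ring.
  by rewrite /= expn0 expn1; ring.
split=> //.
have -> : Sseq C D n.+4 = C ^+ (2 ^ n.+2) * Sseq C D n.+3 + D ^+ (2 ^ n.+2) * Sseq C D n.+2 by [].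
have h2 := Sseq_pow ch C D n.+1 1; have h4 := Sseq_pow ch C D n 2.
rewrite expn1 (_ : (n.+1 + 1 = n.+2)%N) ?addn1 // in h2.
rewrite (_ : (2^2 = 4)%N) ?addn2 // in h4.
rewrite h2 h4 IH2 [in X in _ + D ^+ (2 ^ n.+2) * X = _]IH1.
set c4 := C ^+ _; set d4 := D ^+ _.
set X := Sseq C D n.+2; set Y := Sseq C D n.+1; set Z := Sseq C D n.
by ring.
Qed.
End Aux.

Lemma char2_ring (F : fieldType) (ch : 2 \in [pchar F]) (a b k : F) :
  a - b = 2 * k -> a = b.
Proof. by rewrite (pcharf0 ch) mul0r => /eqP; rewrite subr_eq0 => /eqP. Qed.

Lemma pow2S (F : fieldType) (x : F) n : x ^+ (2 ^ n.+1) = (x ^+ (2 ^ n)) ^+ 2.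
Proof. by rewrite expnSr exprM. Qed.

Lemma two0 (F : fieldType) (ch : 2 \in [pchar F]) : (2 : F) = 0.
Proof. exact: pcharf0 ch. Qed.

Lemma L_frob (F : fieldType) (ch : 2 \in [pchar F]) (A C z : F) n :
  (A * z ^+ 4 + A * C * z ^+ 2 + z) ^+ (2 ^ n) =
  A ^+ (2 ^ n) * (z ^+ (2 ^ n)) ^+ 4 + A ^+ (2 ^ n) * C ^+ (2 ^ n) * (z ^+ (2 ^ n)) ^+ 2
  + z ^+ (2 ^ n).
Proof.
rewrite !frobD // !exprMn; congr (_ * _ + _ * _ + _); by rewrite -!exprM mulnC.
Qed.

Lemma fwd (F : fieldType) (ch : 2 \in [pchar F]) (A C D : F) (hAD : D * A = 1) (z : F) n :
  z = D * A ^+ (2 ^ n) * Sseq C D n.+1 * z ^+ (2 ^ n)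
      + D * A ^+ (2 ^ n) * Sseq C D n * z ^+ (2 ^ n.+1)
      + \sum_(k < n) D * A ^+ (2 ^ k) * Sseq C D k.+1 * (A * z ^+ 4 + A * C * z ^+ 2 + z) ^+ (2 ^ k).
Proof.
elim: n => [|n IH].
  by rewrite big_ord0 /= expn0 expn1 !expr1 mulr1 mulr0 mul0r !addr0 hAD mul1r.
rewrite big_ord_recr {1}IH L_frob // !pow2S.
rewrite (_ : Sseq C D n.+2 = C^+(2^n) * Sseq C D n.+1 + D^+(2^n) * Sseq C D n) //.
have h2 := two0 ch.
have hADn : D ^+ (2 ^ n) * A ^+ (2 ^ n) = 1 by rewrite -exprMn hAD expr1n.
set S := \sum_(i < n) _.
rewrite -/(D^+(2^n)) -/(A^+(2^n)) in hADn.
set zn := z ^+ (2 ^ n); set An := A ^+ (2 ^ n); set Dn := D ^+ (2 ^ n); set Cn := C ^+ (2 ^ n).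
set X := Sseq C D n.+1; set Y := Sseq C D n.
rewrite -/Dn -/An in hADn.
rewrite /=. by ring: h2 hADn.
Qed.

Lemma bwd (F : fieldType) (ch : 2 \in [pchar F]) (C D z : F) n :
  \sum_(k < n.+1) (Sseq C D (n - k) ^+ 2 * (z ^+ 4 + C * z ^+ 2 + D * z)) ^+ (2 ^ k)
  = z ^+ (2 ^ n.+1) + Sseq C D n.+1 * z ^+ 2 + D * Sseq C D n ^+ 2 * z.
Proof.
have h2 := two0 ch.
elim: n => [|n IH].
  rewrite big_ord_recl big_ord0 /= expn0 expn1 expr1; ring: h2.
rewrite big_ord_recl subn0.
under eq_bigr => i _ do rewrite subSS pow2S.
rewrite -(frob_sum ch 1) expn1 IH Sseq_dual //.
set X := Sseq C D n.+1; set Y := Sseq C D n.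
rewrite /= expn0 expr1 !pow2S.
set zn := z ^+ (2 ^ n).
apply: (char2_ring ch (k := X ^+ 2 * z ^+ 4 + zn ^+ 2 * X * z ^+ 2 + zn ^+ 2 * D * Y ^+ 2 * z
   + X * D * Y ^+ 2 * z ^+ 3)).
ring.
Qed.

Lemma opp2 (F : fieldType) (ch : 2 \in [pchar F]) (x : F) : - x = x.
Proof. by apply/esym/eqP; rewrite -addr_eq0 addrr_pchar2. Qed.

Lemma char2_eq (F : fieldType) (ch : 2 \in [pchar F]) (x y : F) : (x + y == 0) = (x == y).
Proof. by rewrite -[x == y]subr_eq0 (opp2 ch). Qed.

Lemma cardK (F : finFieldType) (ch : 2 \in [pchar F]) m :
  (0 < m)%N -> #|F| = ((2 ^ m) ^ 2)%N ->
  (2 ^ m <= #|[set x : F | x ^+ (2 ^ m) == x]|)%N.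
Proof.
move=> m0 cF.
set q := (2 ^ m)%N.
have q2 : (2 <= q)%N by rewrite /q -{1}(expn1 2) leq_exp2l.
set K := [set x : F | x ^+ q == x].
pose G : {poly F} := 'X^q + 'X.
pose Q : {poly F} := G ^+ q.-1 - 1.
have Q0 : Q != 0.
  apply/eqP => /(congr1 (fun p => p.[0])).
  have e1 : (q == 0)%N = false by case: (q) q2.
  have e2 : (q.-1 == 0)%N = false by case: (q) q2 => [|[]].
  rewrite /Q /G !hornerE expr0n e1 /= expr0n e2 /= sub0r.
  by move=> /eqP; rewrite oppr_eq0 oner_eq0.
have rootsQ : all (root Q) (enum (~: K)).
  apply/allP => x; rewrite mem_enum !inE => xK.
  set T := x ^+ q + x.
  have T0 : T != 0 by rewrite /T char2_eq.
  have Tq : T ^+ q = T.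
    have hc : (2 ^ (m + m) = #|F|)%N by rewrite cF -expnM muln2 addnn.
    rewrite /T frobD // frobP hc expf_card.
    by rewrite addrC.
  have : T * (T ^+ q.-1 - 1) = 0.
    by rewrite mulrBr mulr1 -exprS prednK ?Tq ?subrr //; case: (q) q2.
  move/eqP; rewrite mulf_eq0 (negbTE T0) /= => /eqP HT.
  by rewrite /root /Q /G !hornerE -/T HT.
have szQ : (size Q <= q * q.-1 + 1)%N.
  apply: (leq_trans (size_polyD _ _)); rewrite size_polyN size_poly1 geq_max.
  apply/andP; split; last by rewrite addn1.
  apply: (leq_trans (size_poly_exp_leq _ _)).
  have : (size G <= q.+1)%N.
    apply: (leq_trans (size_polyD _ _)); rewrite size_polyXn size_polyX geq_max leqnn /=.
    by rewrite ltnS; apply: ltnW.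
  move=> h; rewrite addn1 ltnS leq_mul2r; apply/orP; right.
  move: h; lia.
have := max_poly_roots Q0 rootsQ (enum_uniq _).
rewrite -cardE => hc.
have := cardsC K; rewrite cF -/q => hK.
have h1 : (#|~: K| <= q * q.-1)%N by have := leq_trans hc szQ; rewrite addn1 ltnS.
have h2 : (q ^ 2 = q * q.-1 + q)%N by rewrite -mulnSr prednK ?expn2 //; case: (q) q2.
rewrite h2 in hK; move: hK h1; set P := (q * q.-1)%N.
lia.
Qed.

Lemma linpoly0 (F : finFieldType) m (c : nat -> F) :
  (0 < m)%N -> (2 ^ m <= #|[set x : F | x ^+ (2 ^ m) == x]|)%N ->
  (forall w : F, w ^+ (2 ^ m) = w -> \sum_(k < m) c k * w ^+ (2 ^ k) = 0) ->
  forall j, (j < m)%N -> c j = 0.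
Proof.
move=> m0 cK H j jm.
pose p : {poly F} := \sum_(k < m) c k *: 'X^(2 ^ k).
have p0 : p = 0.
  apply: (@roots_geq_poly_eq0 _ p (enum [set x : F | x ^+ (2 ^ m) == x])).
  - apply/allP => x; rewrite mem_enum inE => /eqP xK.
    rewrite /root /p horner_sum.
    under eq_bigr do rewrite hornerZ hornerXn.
    by rewrite H.
  - exact: enum_uniq.
  rewrite -cardE; apply: leq_trans cK.
  apply: (leq_trans (size_sum _ _ _)).
  apply/bigmax_leqP => k _.
  apply: (leq_trans (size_scale_leq _ _)); rewrite size_polyXn.
  have hk : (2 ^ k <= 2 ^ m.-1)%N by rewrite leq_exp2l //; case: (m) k m0 => [|mm] [kk hkk] //.
  have hm : (2 ^ m = 2 ^ m.-1 + 2 ^ m.-1)%N by rewrite addnn -mul2n -expnS prednK.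
  have h1 : (0 < 2 ^ m.-1)%N by rewrite expn_gt0.
  rewrite hm; lia.
have := congr1 (fun p : {poly F} => p`_(2 ^ j)) p0.
rewrite /p coef_sum coef0 (bigD1 (Ordinal jm)) //= coefZ coefXn eqxx mulr1.
rewrite big1 ?addr0 // => k /negbTE hk.
rewrite coefZ coefXn eqn_exp2l // (_ : (j == k) = false) ?mulr0 //.
by apply/negbTE; move: hk; apply: contraFN => /eqP e; apply/eqP/val_inj.
Qed.

Lemma Dpow (F : fieldType) (A : F) (k : nat) : A != 0 ->
  (A^-1) ^ (1 - (2 ^ k)%:Z) = A^-1 * A ^+ (2 ^ k).
Proof.
move=> A0.
rewrite expfzDr ?invr_eq0 // -exprz_inv invrK expr1z.
by [].
Qed.

Lemma vterm (F : fieldType) (D S w : F) k :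
  D ^+ (2 ^ k) * S ^+ (2 ^ k.+1) * w ^+ (2 ^ k) = (S ^+ 2 * (D * w)) ^+ (2 ^ k).
Proof.
rewrite expnS exprM -!exprMn; congr (_ ^+ _); ring.
Qed.


Unset Implicit Arguments. Set Strict Implicit.

Theorem theorem3p13 (F : finFieldType) (m i : nat) (b delta : F) :
  (0 < m)%N ->
  #|F| = ((2 ^ m) ^ 2)%N ->
  b ^+ (2 ^ m) = b -> b != 0 ->
  delta ^+ (2 ^ m) != delta ->
  let q := (2 ^ m)%N in
  let A := b * Tr q delta ^+ (2 ^ i) in
  let B := b * Tr q delta ^+ (2 ^ i) * delta ^+ (2 * q + 2) in
  let C := Tr q delta ^+ 2 in
  let D := A^-1 in
  let e := (2 * q + 2 ^ i + 2)%N in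
  let P := fun x : F => b * (x ^+ q + x + delta) ^+ e + x in
  let Pinv := fun x : F =>
    x + b * (delta + \sum_(k < m)
      (D ^+ (2 ^ k) * Sseq C D (m - 1 - k) ^+ (2 ^ k.+1)
        + D ^ (1 - (2 ^ k)%:Z) * Sseq C D k.+1) * (x ^+ q + x + B) ^+ (2 ^ k)) ^+ e in
  bijective P ->
  (forall c : F, P (Pinv c) = c) /\ (forall c : F, Pinv (P c) = c).
Proof.
move=> m0 cF bq b0 dq q A B C D e P Pinv bijP.
pose c := fun k : nat => D ^+ (2 ^ k) * Sseq C D (m - 1 - k) ^+ (2 ^ k.+1)
        + D ^ (1 - (2 ^ k)%:Z) * Sseq C D k.+1.
pose M := fun w : F => \sum_(k < m) c k * w ^+ (2 ^ k).
have ME : forall w, M w = \sum_(k < m) c k * w ^+ (2 ^ k) by [].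
have cE : forall k, c k = D ^+ (2 ^ k) * Sseq C D (m - 1 - k) ^+ (2 ^ k.+1)
        + D ^ (1 - (2 ^ k)%:Z) * Sseq C D k.+1 by [].
have PinvE : forall x, Pinv x = x + b * (delta + M (x ^+ q + x + B)) ^+ e by [].
have PE : forall x, P x = b * (x ^+ q + x + delta) ^+ e + x by [].
have BE : B = A * delta ^+ (2 * q + 2) by [].
have DE : D = A^-1 by [].
have CE : C = Tr q delta ^+ 2 by [].
have AE : A = b * Tr q delta ^+ (2 ^ i) by [].
have eE : e = (2 * q + 2 ^ i + 2)%N by [].
have qE : q = (2 ^ m)%N by [].
clearbody Pinv P e M c D C B A q.
subst q.
have [n mE] : exists n, m = n.+1 by exists m.-1; rewrite prednK.
subst m.
have ch : 2 \in [pchar F].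
  apply: (@card_finPcharP _ 2 (n.+1 * 2)) => //; by rewrite cF expnM.
have h2 := two0 ch.
have xx : forall x : F, x + x = 0 := addrr_pchar2 ch.
have qD : forall x y : F, (x + y) ^+ (2 ^ n.+1) = x ^+ (2 ^ n.+1) + y ^+ (2 ^ n.+1) := fun x y => frobD ch n.+1 x y.
have xqq : forall x : F, (x ^+ (2 ^ n.+1)) ^+ (2 ^ n.+1) = x.
  have hc : (2 ^ (n.+1 + n.+1) = #|F|)%N by rewrite cF -expnM muln2 addnn.
  by move=> x; rewrite frobP hc expf_card.
set t := Tr (2 ^ n.+1) delta.
have tq : t ^+ (2 ^ n.+1) = t by rewrite /t /Tr qD xqq addrC.
have t0 : t != 0 by rewrite /t /Tr char2_eq // eq_sym.
have A0 : A != 0 by rewrite AE mulf_neq0 // expf_neq0.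
have DA : D * A = 1 by rewrite DE mulVf.
have D0 : D != 0 by rewrite DE invr_eq0.
have Aq : A ^+ (2 ^ n.+1) = A by rewrite AE exprMn bq exprAC tq.
have Cq : C ^+ (2 ^ n.+1) = C by rewrite CE exprAC tq.
have Dq : D ^+ (2 ^ n.+1) = D by rewrite DE exprVn Aq.
have Sq : forall j, Sseq C D j ^+ (2 ^ n.+1) = Sseq C D j.
  suff H : forall j, Sseq C D j ^+ (2 ^ n.+1) = Sseq C D j /\ Sseq C D j.+1 ^+ (2 ^ n.+1) = Sseq C D j.+1
    by move=> j; case: (H j).
  elim=> [|j [IH1 IH2]]; first by rewrite /= expr0n expn_eq0 expr1n.
  split => //.
  rewrite (_ : Sseq C D j.+2 = C ^+ (2 ^ j) * Sseq C D j.+1 + D ^+ (2 ^ j) * Sseq C D j) //.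
  by rewrite qD !exprMn !(exprAC _ (2 ^ j)) Cq Dq IH1 IH2.
have zK : forall x : F, (x ^+ (2 ^ n.+1) + x) ^+ (2 ^ n.+1) = x ^+ (2 ^ n.+1) + x.
  by move=> x; rewrite qD xqq addrC.
have TP : forall x, P x ^+ (2 ^ n.+1) + P x + B =
    A * (x ^+ (2 ^ n.+1) + x) ^+ 4 + A * C * (x ^+ (2 ^ n.+1) + x) ^+ 2 + (x ^+ (2 ^ n.+1) + x).
  move=> x; rewrite !PE.
  set z := x ^+ (2 ^ n.+1) + x.
  set u := z + delta.
  have uq : u ^+ (2 ^ n.+1) = z + delta ^+ (2 ^ n.+1) by rewrite qD zK.
  set v := z + delta ^+ (2 ^ n.+1).
  have vq : v ^+ (2 ^ n.+1) = u by rewrite qD zK xqq.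
  have ue : u ^+ e = v ^+ 2 * u ^+ (2 ^ i) * u ^+ 2.
    by rewrite eE (exprD u (2 * 2 ^ n.+1 + 2 ^ i) 2) (exprD u (2 * 2 ^ n.+1) (2 ^ i)) exprM (exprAC u 2) uq.
  have ueq : (u ^+ e) ^+ (2 ^ n.+1) = u ^+ 2 * v ^+ (2 ^ i) * v ^+ 2.
    rewrite ue !exprMn vq (exprAC u (2 ^ i)) uq -/v; set vi := v ^+ (2 ^ i); ring.
  have uv : u ^+ (2 ^ i) + v ^+ (2 ^ i) = t ^+ (2 ^ i).
    rewrite -frobD // /u /v /t /Tr; congr (_ ^+ _); ring: h2.
  have dE : delta ^+ (2 * 2 ^ n.+1 + 2) = (delta ^+ (2 ^ n.+1)) ^+ 2 * delta ^+ 2.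
    by rewrite exprD mulnC exprM.
  rewrite qD exprMn bq ueq BE dE AE CE -/t.

  rewrite ue.
  set ui := u ^+ (2 ^ i) in uv *; set vi := v ^+ (2 ^ i) in uv *; set T2 := t ^+ (2 ^ i) in uv *.
  set dq' := delta ^+ (2 ^ n.+1); set xq := x ^+ (2 ^ n.+1).
  have uE : u = xq + x + delta by [].
  have vE : v = xq + x + dq' by [].
  have tE : t = delta + dq' by [].
  have zE : z = xq + x by [].
  clear ue ueq uq vq dE.
  clearbody ui vi T2 u v z t dq' xq.
  rewrite uE vE zE tE -uv.
  apply: (char2_ring ch (k := b * (ui + vi) * (delta ^+ 2 * dq' ^+ 2 + (xq + x) ^+ 3 * (delta + dq')
     + (xq + x) ^+ 2 * delta * dq' + (xq + x) * (delta + dq') * delta * dq'))).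
  ring.
have sq2 : forall x y : F, (x + y) ^+ 2 = x ^+ 2 + y ^+ 2 := fun x y => frobD ch 1 x y.
pose lam := Sseq C D n.+2 + D * Sseq C D n ^+ 2.
pose Lf := fun z : F => A * z ^+ 4 + A * C * z ^+ 2 + z.
have ML : forall z, z ^+ (2 ^ n.+1) = z -> M (Lf z) = lam * z.
  move=> z zq; rewrite ME.
  under eq_bigr => k _ do rewrite cE mulrDl.
  rewrite big_split /=.
  under eq_bigr => k _ do rewrite subn1 /= vterm.
  have hDw : D * Lf z = z ^+ 4 + C * z ^+ 2 + D * z by rewrite /Lf; ring: DA.
  rewrite hDw bwd // zq.
  under eq_bigr => k _ do rewrite DE (Dpow _ A0) -DE.
  have hf := fwd ch C DA z n.+1.
  rewrite Aq zq pow2S zq in hf.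
  set W := \sum_(k < n.+1) _ in hf *.
  have HW : W = z - D * A * Sseq C D n.+2 * z - D * A * Sseq C D n.+1 * z ^+ 2.
    by rewrite {1}hf; ring.
  rewrite HW DA !mul1r /lam.
  apply: (char2_ring ch (k := z - Sseq C D n.+2 * z)); ring.
have lam2 : lam ^+ 2 = lam.
  have e1 : Sseq C D n.+2 ^+ 2 = C * Sseq C D n.+1 ^+ 2 + D * Sseq C D n ^+ 2.
    rewrite (_ : Sseq C D n.+2 = C ^+ (2 ^ n) * Sseq C D n.+1 + D ^+ (2 ^ n) * Sseq C D n) //.
    by rewrite sq2 !exprMn -!pow2S Cq Dq.
  have e2 := Sseq_dual ch C D n.
  rewrite /lam sq2 exprMn e1 e2.
  set S1 := Sseq C D n.+1; set S0 := Sseq C D n; ring.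
have lam01 : lam = 0 \/ lam = 1.
  have : lam * (lam - 1) = 0 by rewrite mulrBr mulr1 -expr2 lam2 subrr.
  move/eqP; rewrite mulf_eq0 subr_eq0 => /orP [] /eqP; by [left | right].
pose K := [set x : F | x ^+ (2 ^ n.+1) == x].
have LK : forall z, z ^+ (2 ^ n.+1) = z -> Lf z ^+ (2 ^ n.+1) = Lf z.
  move=> z zq; rewrite /Lf !qD !exprMn Aq Cq zq; ring.
have TPx : forall x, P x ^+ (2 ^ n.+1) + P x = Lf (x ^+ (2 ^ n.+1) + x) + B.
  by move=> x; rewrite /Lf -TP -addrA xx addr0.
pose th := delta / t.
have thq : th ^+ (2 ^ n.+1) + th = 1.
  rewrite /th exprMn exprVn tq -mulrDl addrC.
  by rewrite [delta + _](_ : _ = t) ?mulfV // /t /Tr.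
have Tth : forall z, z ^+ (2 ^ n.+1) = z -> (z * th) ^+ (2 ^ n.+1) + z * th = z.
  by move=> z zq; rewrite exprMn zq -mulrDr thq mulr1.
have Pinj := bij_inj bijP.
have Linj : forall z1 z2, z1 ^+ (2 ^ n.+1) = z1 -> z2 ^+ (2 ^ n.+1) = z2 -> Lf z1 = Lf z2 -> z1 = z2.
  move=> z1 z2 z1q z2q hL.
  set x1 := z1 * th; set x2 := z2 * th.
  set s := P x1 + P x2.
  have sq : s ^+ (2 ^ n.+1) = s.
    apply/eqP; rewrite -(char2_eq ch) /s qD.
    rewrite (_ : P x1 ^+ (2 ^ n.+1) + P x2 ^+ (2 ^ n.+1) + (P x1 + P x2) =
       (P x1 ^+ (2 ^ n.+1) + P x1) + (P x2 ^+ (2 ^ n.+1) + P x2)); last by ring.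
    by rewrite !TPx Tth // Tth // hL (_ : forall a b : F, a + b + (a + b) = (a + b) + (a + b)) // xx.
  have hx : (x2 + s) ^+ (2 ^ n.+1) + (x2 + s) = x2 ^+ (2 ^ n.+1) + x2.
    rewrite qD sq.
    rewrite (_ : x2 ^+ (2 ^ n.+1) + s + (x2 + s) = x2 ^+ (2 ^ n.+1) + x2 + (s + s)); last by ring.
    by rewrite xx addr0.
  have hP : P (x2 + s) = P x1.
    rewrite PE hx addrA -PE /s.
    rewrite (_ : P x2 + (P x1 + P x2) = P x1 + (P x2 + P x2)); last by ring.
    by rewrite xx addr0.
  have := Pinj _ _ hP.
  move/(congr1 (fun y => y ^+ (2 ^ n.+1) + y)).
  by rewrite hx !Tth.
have Lsurj : forall w, w ^+ (2 ^ n.+1) = w -> exists z, z ^+ (2 ^ n.+1) = z /\ Lf z = w.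
  move=> w wq.
  have sub : Lf @: K \subset K.
    apply/subsetP => y /imsetP [z]; rewrite inE => /eqP zq ->.
    by rewrite inE LK.
  have cd : #|Lf @: K| = #|K|.
    apply: card_in_imset => z1 z2; rewrite !inE => /eqP z1q /eqP z2q; exact: Linj.
  have eqK : Lf @: K = K by apply/eqP; rewrite eqEcard sub cd leqnn.
  have : w \in Lf @: K by rewrite eqK inE wq.
  case/imsetP => z; rewrite inE => /eqP zq ->.
  by exists z.
have cK := cardK ch (ltn0Sn n) cF.
have lam1 : lam = 1.
  case: lam01 => // lam0; exfalso.
  have hM0 : forall w : F, w ^+ (2 ^ n.+1) = w -> \sum_(k < n.+1) c k * w ^+ (2 ^ k) = 0.
    move=> w wq; have [z [zq <-]] := Lsurj w wq.
    by rewrite -ME ML // lam0 mul0r.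
  have c0 := linpoly0 (ltn0Sn n) cK hM0 (ltn0Sn n).
  have cn := linpoly0 (ltn0Sn n) cK hM0 (ltnSn n).
  rewrite cE subn0 subn1 /= expn0 expr1 expn1 in c0.
  rewrite cE subn1 /= subnn expr0n expn_eq0 /= mulr0 add0r in cn.
  rewrite DE (Dpow _ A0) -DE in cn.
  have S1 : Sseq C D n.+1 = 0.
    move/eqP: cn; rewrite !mulf_eq0 (negbTE D0) expf_eq0 (negbTE A0) andbF /=.
    by move/eqP.
  rewrite subrr expr0z mul1r in c0.
  have DS : D * Sseq C D n ^+ 2 = 1.
    by move/eqP: c0; rewrite addr_eq0 (opp2 ch) => /eqP.
  have S2 : Sseq C D n.+2 = 1.
    by move/eqP: lam0; rewrite /lam DS addr_eq0 (opp2 ch) => /eqP.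
  pose c' := fun k : nat => D * A ^+ (2 ^ k) * Sseq C D k.+1.
  have hW0 : forall w : F, w ^+ (2 ^ n.+1) = w -> \sum_(k < n.+1) c' k * w ^+ (2 ^ k) = 0.
    move=> w wq; have [z [zq <-]] := Lsurj w wq.
    have hf := fwd ch C DA z n.+1.
    rewrite Aq zq pow2S zq DA S2 S1 !mul1r mul0r addr0 in hf.
    rewrite /c' /Lf.
    set W := \sum_(k < n.+1) _ in hf *.
    by apply: (addrI z); rewrite -hf addr0.
  have := linpoly0 (ltn0Sn n) cK hW0 (ltn0Sn n).
  rewrite /c' expn0 expr1 DA mul1r /= => /eqP; by rewrite oner_eq0.
have inv2 : forall x, Pinv (P x) = x.
  move=> x; rewrite PinvE TPx -addrA xx addr0 ML ?zK // lam1 mul1r.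
  rewrite PE addrC [delta + _]addrC.
  by rewrite addrA xx add0r.
split => // y.
case: bijP => g gK Kg.
by rewrite -(Kg y) inv2.
Qed.
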